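(* Assume $CA_2$. Then $\omega_1\not\rightarrow(\omega_1,\omega+2)^2_2$; that is, there is $c:[\omega_1]^2\to2$ such that there is no uncountable $0$-monochromatic subset of $\omega_1$ and no $1$-monochromatic subset of $\omega_1$ of order type $\omega+2$.
   Context: A set $Y\subseteq\omega_1$ is $i$-monochromatic for $c$ if $c(\{\alpha,\beta\})=i$ for all distinct $\alpha,\beta\in Y$. A type is a sequence $\tau=\{(m_k,n_{k+1},r_{k+1})\}_{k\in\omega}$ of natural numbers with $m_0=1$; $n_k\ge2$ for $k\ge1$; every $r\in\omega$ equals $r_k$ for infinitely many $k$; $m_k>r_{k+1}$; and $m_{k+1}=r_{k+1}+(m_k-r_{k+1})n_{k+1}$ for all $k$. For a set of ordinals $X$ and $\mathcal F\subseteq[X]^{<\omega}$, $\mathcal F_k$ is the set of elements of rank $k$ in $(\mathcal F,\subsetneq)$; $A\sqsubseteq B$ means $A\subseteq B$ and every element of $B$ below an element of $A$ is in $A$; $A<B$ means every element of $A$ is below every element of $B$. $\mathcal F$ is a construction scheme over $X$ of type $\tau$ if (1) every finite subset of $X$ lies in a member of $\mathcal F$; (2) $|F|=m_k$ for $F\in\mathcal F_k$; (3) $E\cap F\sqsubseteq E,F$ for $E,F\in\mathcal F_k$; (4) each $F\in\mathcal F_{k+1}$ is the union of uniquely determined $F_0,\dots,F_{n_{k+1}-1}\in\mathcal F_k$ forming a $\Delta$-system with root $R(F)$, $|R(F)|=r_{k+1}$, $R(F)<F_0\setminus R(F)<\dots<F_{n_{k+1}-1}\setminus R(F)$. For a construction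 scheme $\mathcal F$ over $\omega_1$, $l\ge1$, $F\in\mathcal F_l$ and finite $\mathcal C\subseteq[\omega_1]^{<\omega}$: $F$ captures $\mathcal C$ if $|\mathcal C|\le n_l$ and $\mathcal C$ can be enumerated as $\{c_i\}_{i<|\mathcal C|}$ with $c_i\subseteq F_i$, $c_i\setminus R(F)\neq\emptyset$ and $\phi_i[c_0]=c_i$ where $\phi_i:F_0\to F_i$ is the increasing bijection. $\mathcal F$ is $n$-capturing if for every uncountable $S\subseteq[\omega_1]^{<\omega}$ and every $k\in\omega$ there are $\mathcal C\in[S]^n$, $l>k$ and $F\in\mathcal F_l$ capturing $\mathcal C$. $CA_n$ is the statement: for every type $\tau$ with $n\le n_k$ for all $k\ge1$ there is an $n$-capturing construction scheme over $\omega_1$ of type $\tau$. *)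

(* Defs.v *)
(* omega_1 is modelled as an arbitrary strict well-order (T, lt)
   that is uncountable and all of whose proper initial segments are countable;
   this determines (T, lt) up to isomorphism as omega_1.
   Finite subsets of T are represented canonically as strictly lt-increasing
   lists (so set equality = list equality). *)
From Stdlib Require Import List Arith Lia Sorting.Sorted Permutation.
Import ListNotations.

Section Defs.
Variable T : Type.
Variable lt : T -> T -> Prop.

Definition countable (Y : T -> Prop) : Prop :=
  exists f : T -> nat, forall x y, Y x -> Y y -> f x = f y -> x = y.

Definition IsOmega1 : Prop :=
  (forall x, ~ lt x x) /\
  (forall x y z, lt x y -> lt y z -> lt x z) /\
  (forall x y, lt x y \/ x = y \/ lt y x) /\
  well_founded lt /\
  ~ countable (fun _ => True) /\
  (forall x, countable (fun y => lt y x)).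

Definition finset (A : list T) : Prop := StronglySorted lt A.

Definition psub (B A : list T) : Prop := incl B A /\ ~ incl A B.

Inductive chain_to (F : list T -> Prop) : list T -> nat -> Prop :=
| chain0 A : F A -> chain_to F A 0
| chainS A B k : F A -> chain_to F B k -> psub B A -> chain_to F A (S k).

Definition rank_is (F : list T -> Prop) (A : list T) (k : nat) : Prop :=
  chain_to F A k /\ ~ chain_to F A (S k).

Definition init_seg (P : T -> Prop) (B : list T) : Prop :=
  (forall x, P x -> In x B) /\
  (forall x y, P x -> In y B -> lt y x -> P y).

Definition set_lt (P Q : T -> Prop) : Prop :=
  forall x y, P x -> Q y -> lt x y.

Definition diff (A R : list T) : T -> Prop := fun x => In x A /\ ~ In x R.

(* a type tau = (m_k, n_{k+1}, r_{k+1})_k given by three sequences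
   (the values n 0 and r 0 are irrelevant) *)
Definition is_type (m n r : nat -> nat) : Prop :=
  m 0 = 1 /\
  (forall k, 1 <= k -> 2 <= n k) /\
  (forall r0 N, exists k, N < k /\ r k = r0) /\
  (forall k, r (S k) < m k) /\
  (forall k, m (S k) = r (S k) + (m k - r (S k)) * n (S k)).

(* Fs = [F_0; ...; F_{n-1}] is a decomposition of A ∈ F_{k+1} into elements
   of F_k forming a Delta-system with root R, |R| = r, and
   R < F_0\R < ... < F_{n-1}\R *)
Definition decomp (F : list T -> Prop) (k : nat) (nk rk : nat)
    (A : list T) (Fs : list (list T)) (R : list T) : Prop :=
  length Fs = nk /\
  Forall (fun B => rank_is F B k) Fs /\
  (forall x, In x A <-> exists B, In B Fs /\ In x B) /\
  finset R /\ length R = rk /\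
  (forall i j, i < j < nk ->
     forall x, (In x (nth i Fs []) /\ In x (nth j Fs [])) <-> In x R) /\
  set_lt (fun x => In x R) (diff (nth 0 Fs []) R) /\
  (forall i, S i < nk -> set_lt (diff (nth i Fs []) R) (diff (nth (S i) Fs []) R)).

Definition construction_scheme (m n r : nat -> nat) (F : list T -> Prop) : Prop :=
  (forall A, F A -> finset A) /\
  (forall l : list T, exists A, F A /\ incl l A) /\
  (forall A k, rank_is F A k -> length A = m k) /\
  (forall E G k, rank_is F E k -> rank_is F G k ->
     init_seg (fun x => In x E /\ In x G) E /\
     init_seg (fun x => In x E /\ In x G) G) /\
  (forall A k, rank_is F A (S k) ->
     exists! Fs, exists R, decomp F k (n (S k)) (r (S k)) A Fs R).

Definition captures (m n r : nat -> nat) (F : list T -> Prop) (l : nat)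
    (A : list T) (cs : list (list T)) : Prop :=
  1 <= l /\ rank_is F A l /\ length cs <= n l /\
  exists cs', Permutation cs cs' /\
  exists Fs R k, l = S k /\ decomp F k (n l) (r l) A Fs R /\
  forall i, i < length cs' ->
    incl (nth i cs' []) (nth i Fs []) /\
    (exists x, In x (nth i cs' []) /\ ~ In x R) /\
    (* phi_i[c_0] = c_i, phi_i : F_0 -> F_i the increasing bijection *)
    (forall y, In y (nth i cs' []) <->
       exists j x, nth_error (nth 0 Fs []) j = Some x /\ In x (nth 0 cs' []) /\
                   nth_error (nth i Fs []) j = Some y).

Definition uncountable_family (S : list T -> Prop) : Prop :=
  ~ exists f : list T -> nat, forall A B, S A -> S B -> f A = f B -> A = B.

Definition n_capturing (m n r : nat -> nat) (N : nat) (F : list T -> Prop) : Prop :=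
  forall S : list T -> Prop,
    (forall A, S A -> finset A) -> uncountable_family S ->
    forall k, exists cs l A,
      NoDup cs /\ length cs = N /\ Forall S cs /\ k < l /\ captures m n r F l A cs.

Definition CA (N : nat) : Prop :=
  forall m n r : nat -> nat, is_type m n r -> (forall k, 1 <= k -> N <= n k) ->
  exists F, construction_scheme m n r F /\ n_capturing m n r N F.

(* colourings c : [omega_1]^2 -> 2 are given by c a b for a < b;
   false = colour 0, true = colour 1 *)
Definition monochromatic (c : T -> T -> bool) (i : bool) (Y : T -> Prop) : Prop :=
  forall a b, Y a -> Y b -> lt a b -> c a b = i.

Definition ordtype_omega_plus_2 (Y : T -> Prop) : Prop :=
  exists (f : nat -> T) (a b : T),
    (forall i j, i < j -> lt (f i) (f j)) /\
    (forall i, lt (f i) a) /\ lt a b /\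
    (forall x, Y x <-> (exists i, x = f i) \/ x = a \/ x = b).
End Defs.

(* Main.v *)
Require Import Defs.
From Stdlib Require Import List Arith.
From Stdlib Require Import Lia Sorting.Sorted Permutation Classical ClassicalEpsilon.
Import ListNotations.

Definition rr (k : nat) : nat := k - Nat.sqrt k * Nat.sqrt k.
Fixpoint mm (k : nat) : nat :=
  match k with 0 => 1 | S k' => rr (S k') + (mm k' - rr (S k')) * 2 end.
Definition nn (k : nat) : nat := 2.

Lemma rr_le k : rr (S k) <= k.
Proof.
  unfold rr. destruct (Nat.sqrt_spec (S k)) as [H1 H2]; [lia|].
  destruct (Nat.sqrt (S k)) as [|s]; simpl in *; nia.
Qed.

Lemma mm_ge k : S k <= mm k.
Proof.
  induction k; simpl; [lia|]. pose proof (rr_le k). fold (mm k). lia.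
Qed.

Lemma type_ok : is_type mm nn rr.
Proof.
  split; [reflexivity|]. split; [unfold nn; lia|]. split.
  - intros r0 N. exists ((N + r0 + 1) * (N + r0 + 1) + r0). split; [nia|].
    unfold rr. rewrite (Nat.sqrt_unique _ (N + r0 + 1)); nia.
  - split.
    + intro k. pose proof (rr_le k). pose proof (mm_ge k). lia.
    + intro k. reflexivity.
Qed.

Lemma rank_F T F A k : rank_is T F A k -> F A.
Proof. intros [H _]. inversion H; auto. Qed.

Lemma Qlem T lt m n r F (HF : construction_scheme T lt m n r F) :
  forall l k, k <= l -> forall E G, rank_is T F E k -> rank_is T F G l ->
  forall u v, In u E -> In u G -> In v E -> lt v u -> In v G.
Proof.
  destruct HF as [_ [_ [_ [H3 H4]]]].
  induction l; intros k Hk E G HE HG u v HuE HuG HvE Hvu.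
  - assert (k = 0) by lia. subst.
    destruct (H3 E G 0 HE HG) as [[_ I] _]. exact (proj2 (I u v (conj HuE HuG) HvE Hvu)).
  - destruct (Nat.eq_dec k (S l)) as [->|Hne].
    + destruct (H3 E G _ HE HG) as [[_ I] _]. exact (proj2 (I u v (conj HuE HuG) HvE Hvu)).
    + destruct (H4 G l HG) as [Fs [[R D] _]].
      destruct D as [_ [Hr [Hu _]]].
      destruct (proj1 (Hu u) HuG) as [B [HB HuB]].
      apply Hu. exists B. split; auto.
      rewrite Forall_forall in Hr.
      exact (IHl k ltac:(lia) E B HE (Hr B HB) u v HuE HuB HvE Hvu).
Qed.

Lemma index_lem T (lt : T -> T -> Prop)
  (irr : forall x, ~ lt x x) (tr : forall x y z, lt x y -> lt y z -> lt x z) :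
  forall L1 L2, StronglySorted lt L1 -> StronglySorted lt L2 ->
  (forall u y, In u L1 -> In u L2 -> In y L1 -> lt y u -> In y L2) ->
  (forall u y, In u L1 -> In u L2 -> In y L2 -> lt y u -> In y L1) ->
  forall i j u, nth_error L1 i = Some u -> nth_error L2 j = Some u -> i = j.
Proof.
  induction L1 as [|a0 L1 IH]; intros L2 S1 S2 C1 C2 i j u Hi Hj.
  - destruct i; discriminate.
  - destruct L2 as [|b0 L2]; [destruct j; discriminate|].
    inversion S1 as [|? ? S1' F1]; subst. inversion S2 as [|? ? S2' F2]; subst.
    rewrite Forall_forall in F1, F2.
    assert (HuA : In u (a0 :: L1)) by (eapply nth_error_In; eauto).
    assert (HuB : In u (b0 :: L2)) by (eapply nth_error_In; eauto).
    destruct i as [|i]; destruct j as [|j]; simpl in Hi, Hj.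
    + reflexivity.
    + exfalso. injection Hi as <-. apply nth_error_In in Hj.
      pose proof (F2 _ Hj) as Hb.
      assert (In b0 (a0 :: L1)) as Hb0 by (apply (C2 a0 b0); simpl; auto).
      destruct Hb0 as [<-|Hb0]; [exact (irr _ Hb)|].
      exact (irr _ (tr _ _ _ Hb (F1 _ Hb0))).
    + exfalso. injection Hj as <-. apply nth_error_In in Hi.
      pose proof (F1 _ Hi) as Ha.
      assert (In a0 (b0 :: L2)) as Ha0 by (apply (C1 b0 a0); simpl; auto).
      destruct Ha0 as [<-|Ha0]; [exact (irr _ Ha)|].
      exact (irr _ (tr _ _ _ Ha (F2 _ Ha0))).
    + f_equal.
      pose proof (nth_error_In _ _ Hi) as Hi'. pose proof (nth_error_In _ _ Hj) as Hj'.
      assert (Ha0 : In a0 (b0 :: L2)) by (apply (C1 u a0); simpl; auto).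
      assert (Hb0 : In b0 (a0 :: L1)) by (apply (C2 u b0); simpl; auto).
      assert (a0 = b0) as <-.
      { destruct Ha0 as [|Ha0]; auto. destruct Hb0 as [|Hb0]; auto.
        exfalso. exact (irr _ (tr _ _ _ (F1 _ Hb0) (F2 _ Ha0))). }
      refine (IH L2 S1' S2' _ _ i j u Hi Hj).
      * intros u' y Hu1 Hu2 Hy Hyu.
        destruct (C1 u' y ltac:(simpl; auto) ltac:(simpl; auto) ltac:(simpl; auto) Hyu)
          as [<-|]; auto.
        exfalso. exact (irr _ (F1 _ Hy)).
      * intros u' y Hu1 Hu2 Hy Hyu.
        destruct (C2 u' y ltac:(simpl; auto) ltac:(simpl; auto) ltac:(simpl; auto) Hyu)
          as [<-|]; auto.
        exfalso. exact (irr _ (F2 _ Hy)).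
Qed.

Lemma below_finite T lt m n r F (HF : construction_scheme T lt m n r F) (a : T) :
  forall K, exists L, forall x k E, k <= K -> rank_is T F E k -> In x E -> In a E ->
     lt x a -> In x L.
Proof.
  induction K.
  - destruct (classic (exists G, rank_is T F G 0 /\ In a G)) as [[G [HG HaG]]|HN].
    + exists G. intros x k E Hk HE HxE HaE Hxa. assert (k = 0) by lia; subst.
      exact (Qlem _ _ _ _ _ _ HF 0 0 (le_n _) E G HE HG a x HaE HaG HxE Hxa).
    + exists []. intros x k E Hk HE HxE HaE Hxa. assert (k = 0) by lia; subst.
      exfalso. apply HN. eauto.
  - destruct IHK as [L HL].
    destruct (classic (exists G, rank_is T F G (S K) /\ In a G)) as [[G [HG HaG]]|HN].
    + exists (L ++ G). intros x k E Hk HE HxE HaE Hxa. apply in_or_app.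
      destruct (Nat.eq_dec k (S K)) as [->|Hne].
      * right. exact (Qlem _ _ _ _ _ _ HF _ _ (le_n _) E G HE HG a x HaE HaG HxE Hxa).
      * left. apply (HL x k E); auto; lia.
    + exists L. intros x k E Hk HE HxE HaE Hxa.
      destruct (Nat.eq_dec k (S K)) as [->|Hne].
      * exfalso. apply HN. eauto.
      * apply (HL x k E); auto; lia.
Qed.

Lemma pigeon T (f : nat -> T) (inj : forall i j, f i = f j -> i = j) (L : list T) :
  exists i, ~ In (f i) L.
Proof.
  apply NNPP. intro H.
  assert (Hall : forall i, In (f i) L).
  { intro i. apply NNPP. intro Hi. apply H. eauto. }
  assert (ND : NoDup (map f (seq 0 (S (length L))))).
  { apply NoDup_map_NoDup_ForallPairs; [|apply seq_NoDup].
    intros x y _ _ E. apply inj; auto. }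
  pose proof (NoDup_incl_length (l' := L) ND) as Hl.
  assert (incl (map f (seq 0 (S (length L)))) L) as Hi.
  { intros y Hy. apply in_map_iff in Hy. destruct Hy as [i [<- _]]. apply Hall. }
  specialize (Hl Hi). rewrite length_map, length_seq in Hl. lia.
Qed.

Definition Col T lt (F : list T -> Prop) (r : nat -> nat) (u v : T) : Prop :=
  exists s D Fs R j, rank_is T F D (S s) /\ decomp T lt F s 2 (r (S s)) D Fs R /\
    ~ In u R /\ ~ In v R /\ nth_error (nth 0 Fs []) j = Some u /\
    nth_error (nth 1 Fs []) j = Some v.

Lemma blocks_in T lt F s nk rk D Fs R i x :
  decomp T lt F s nk rk D Fs R -> i < nk -> In x (nth i Fs []) -> In x D.
Proof.
  intros [Hl [_ [Hu _]]] Hi Hx. apply Hu. exists (nth i Fs []). split; auto.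
  apply nth_In. lia.
Qed.

Lemma blocks_rank T lt F s nk rk D Fs R i :
  decomp T lt F s nk rk D Fs R -> i < nk -> rank_is T F (nth i Fs []) s.
Proof.
  intros [Hl [Hr _]] Hi. rewrite Forall_forall in Hr. apply Hr. apply nth_In. lia.
Qed.

Lemma root_of T lt F s rk D Fs R x :
  decomp T lt F s 2 rk D Fs R -> In x (nth 0 Fs []) -> In x (nth 1 Fs []) -> In x R.
Proof.
  intros [_ [_ [_ [_ [_ [Hroot _]]]]]] H0 H1. apply (Hroot 0 1 ltac:(lia)). auto.
Qed.

Theorem mainTheorem10 :
  forall (T : Type) (lt : T -> T -> Prop),
    IsOmega1 T lt -> CA T lt 2 ->
    exists c : T -> T -> bool,
      (forall Y : T -> Prop, monochromatic T lt c false Y -> countable T Y) /\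
      (forall Y : T -> Prop, monochromatic T lt c true Y -> ~ ordtype_omega_plus_2 T lt Y).
Proof.
  intros T lt HO HCA.
  destruct HO as [irr [tr _]].
  destruct (HCA mm nn rr type_ok ltac:(unfold nn; lia)) as [F [HF Hcap]].
  set (Cl := Col T lt F rr).
  exists (fun u v => if excluded_middle_informative (Cl u v) then true else false).
  assert (Hc : forall u v, (if excluded_middle_informative (Cl u v) then true else false) = true <-> Cl u v).
  { intros u v. destruct (excluded_middle_informative (Cl u v)); split; auto; discriminate. }
  split.
  -
    intros Y HY. apply NNPP. intro HnC.
    set (S := fun l : list T => exists y, Y y /\ l = [y]).
    assert (HS1 : forall A, S A -> finset T lt A).
    { intros A [y [_ ->]]. constructor; constructor. }
    assert (HS2 : uncountable_family T S).
    { intros [g Hg]. apply HnC. exists (fun y => g [y]). intros x y Hx Hy E.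
      assert ([x] = [y]) as E' by (apply Hg; auto; unfold S; eauto).
      injection E'; auto. }
    destruct (Hcap S HS1 HS2 0) as [cs [l [A [_ [Hlen [HFS [_ Hca]]]]]]].
    destruct Hca as [_ [HrA [_ [cs' [Hperm [Fs [R [k [-> [Hdec Hi]]]]]]]]]].
    pose proof (Permutation_length Hperm) as Hl'. rewrite Hlen in Hl'.
    assert (HFS' : Forall S cs') by (eapply Permutation_Forall; eauto).
    destruct cs' as [|c0 [|c1 [|]]]; try (simpl in Hl'; lia).
    destruct (Forall_inv HFS') as [y0 [Hy0 ->]].
    destruct (Forall_inv (Forall_inv_tail HFS')) as [y1 [Hy1 ->]].
    destruct (Hi 0 ltac:(simpl; lia)) as [Hinc0 [[x0 [Hx0 Hx0R]] _]].
    destruct (Hi 1 ltac:(simpl; lia)) as [Hinc1 [[x1 [Hx1 Hx1R]] Hphi]].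
    simpl in Hx0, Hx1. destruct Hx0 as [E0|[]]; subst x0. destruct Hx1 as [E1|[]]; subst x1.
    simpl in Hphi. destruct (proj1 (Hphi y1) (or_introl eq_refl)) as [j [z [Hz0 [Hz Hz1]]]].
    destruct Hz as [Ez|[]]; subst z.
    assert (Hlt : lt y0 y1).
    { destruct Hdec as [_ [_ [_ [_ [_ [_ [_ Hord]]]]]]].
      apply (Hord 0 ltac:(unfold nn; lia)); split; auto; [apply Hinc0|apply Hinc1]; simpl; auto. }
    pose proof (HY y0 y1 Hy0 Hy1 Hlt) as Hfalse.
    assert (Cl y0 y1) as HC.
    { exists k, A, Fs, R, j. split; [exact HrA|]. split; [exact Hdec|]. auto. }
    apply Hc in HC. cbv beta in Hfalse. rewrite HC in Hfalse. discriminate.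
  -
    intros Y HY [f [a [b [Hinc [Hfa [Hab HYe]]]]]].
    assert (Ya : Y a) by (apply HYe; auto).
    assert (Yb : Y b) by (apply HYe; auto).
    assert (Yf : forall i, Y (f i)) by (intro i; apply HYe; eauto).
    assert (Cab : Cl a b) by (apply Hc; apply HY; auto).
    destruct Cab as [s0 [DH [HFs [RH [jH [HrH [HdH [_ [_ [HaH HbH]]]]]]]]]].
    assert (aDH : In a DH) by (apply (blocks_in _ _ _ _ _ _ _ _ _ 0 a HdH); [lia|eapply nth_error_In; eauto]).
    assert (bDH : In b DH) by (apply (blocks_in _ _ _ _ _ _ _ _ _ 1 b HdH); [lia|eapply nth_error_In; eauto]).
    destruct (below_finite _ _ _ _ _ _ HF a (S s0)) as [La HLa].
    destruct (below_finite _ _ _ _ _ _ HF b (S s0)) as [Lb HLb].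
    assert (inj : forall i j, f i = f j -> i = j).
    { intros i j E. destruct (lt_eq_lt_dec i j) as [[H|H]|H]; auto; exfalso.
      - pose proof (Hinc i j H) as X. rewrite E in X. exact (irr _ X).
      - pose proof (Hinc j i H) as X. rewrite E in X. exact (irr _ X). }
    destruct (pigeon _ f inj (La ++ Lb)) as [i Hni].
    set (x := f i) in *. assert (Yx : Y x) by exact (Yf i).
    assert (Hxa : lt x a) by apply Hfa.
    assert (Hxb : lt x b) by (eapply tr; eauto).
    assert (Cxa : Cl x a) by (apply Hc; apply HY; auto).
    assert (Cxb : Cl x b) by (apply Hc; apply HY; auto).
    destruct Cxa as [s1 [DA [AFs [RA [j [HrA [HdA [HxRA [HaRA [HxA0 HaA1]]]]]]]]]].
    destruct Cxb as [s2 [DB [BFs [RB [j' [HrB [HdB [HxRB [HbRB [HxB0 HbB1]]]]]]]]]].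
    assert (xDA : In x DA) by (apply (blocks_in _ _ _ _ _ _ _ _ _ 0 x HdA); [lia|eapply nth_error_In; eauto]).
    assert (aDA : In a DA) by (apply (blocks_in _ _ _ _ _ _ _ _ _ 1 a HdA); [lia|eapply nth_error_In; eauto]).
    assert (xDB : In x DB) by (apply (blocks_in _ _ _ _ _ _ _ _ _ 0 x HdB); [lia|eapply nth_error_In; eauto]).
    assert (bDB : In b DB) by (apply (blocks_in _ _ _ _ _ _ _ _ _ 1 b HdB); [lia|eapply nth_error_In; eauto]).
    assert (H1 : S s0 <= s1).
    { destruct (le_lt_dec (S s0) s1) as [|Hl]; auto. exfalso. apply Hni. apply in_or_app. left.
      apply (HLa x (S s1) DA); auto; lia. }
    assert (H2 : S s0 <= s2).
    { destruct (le_lt_dec (S s0) s2) as [|Hl]; auto. exfalso. apply Hni. apply in_or_app. right.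
      apply (HLb x (S s2) DB); auto; lia. }
    pose proof (blocks_rank _ _ _ _ _ _ _ _ _ 0 HdA ltac:(lia)) as rA0.
    pose proof (blocks_rank _ _ _ _ _ _ _ _ _ 1 HdA ltac:(lia)) as rA1.
    pose proof (blocks_rank _ _ _ _ _ _ _ _ _ 0 HdB ltac:(lia)) as rB0.
    pose proof (blocks_rank _ _ _ _ _ _ _ _ _ 1 HdB ltac:(lia)) as rB1.
    pose proof (nth_error_In _ _ HxA0) as xA0.
    pose proof (nth_error_In _ _ HaA1) as aA1.
    pose proof (nth_error_In _ _ HxB0) as xB0.
    pose proof (nth_error_In _ _ HbB1) as bB1.
    assert (aB1 : In a (nth 1 BFs [])).
    { exact (Qlem _ _ _ _ _ _ HF s2 (S s0) H2 DH _ HrH rB1 b a bDH bB1 aDH Hab). }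
    assert (aDB : In a DB) by (apply (blocks_in _ _ _ _ _ _ _ _ _ 1 a HdB); [lia|auto]).
    destruct (lt_eq_lt_dec s1 s2) as [[Hs|Hs]|Hs].
    + apply HxRB. apply (root_of _ _ _ _ _ _ _ _ _ HdB); auto.
      exact (Qlem _ _ _ _ _ _ HF s2 (S s1) Hs DA _ HrA rB1 a x aDA aB1 xDA Hxa).
    + subst s2.
      destruct HF as [HF1 [_ [_ [HF3 _]]]].
      assert (j = j').
      { destruct (HF3 _ _ _ rA0 rB0) as [[_ I1] [_ I2]].
        apply (index_lem T lt irr tr (nth 0 AFs []) (nth 0 BFs [])
                 (HF1 _ (rank_F _ _ _ _ rA0)) (HF1 _ (rank_F _ _ _ _ rB0))) with (u := x); auto.
        - intros u y Hu1 Hu2 Hy Hyu. exact (proj2 (I1 u y (conj Hu1 Hu2) Hy Hyu)).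
        - intros u y Hu1 Hu2 Hy Hyu. exact (proj1 (I2 u y (conj Hu1 Hu2) Hy Hyu)). }
      subst j'.
      destruct (In_nth_error _ _ aB1) as [j'' Hj''].
      assert (j = j'').
      { destruct (HF3 _ _ _ rA1 rB1) as [[_ I1] [_ I2]].
        apply (index_lem T lt irr tr (nth 1 AFs []) (nth 1 BFs [])
                 (HF1 _ (rank_F _ _ _ _ rA1)) (HF1 _ (rank_F _ _ _ _ rB1))) with (u := a); auto.
        - intros u y Hu1 Hu2 Hy Hyu. exact (proj2 (I1 u y (conj Hu1 Hu2) Hy Hyu)).
        - intros u y Hu1 Hu2 Hy Hyu. exact (proj1 (I2 u y (conj Hu1 Hu2) Hy Hyu)). }
      subst j''. rewrite HbB1 in Hj''. injection Hj'' as ->. exact (irr _ Hab).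
    + apply HxRA. apply (root_of _ _ _ _ _ _ _ _ _ HdA); auto.
      exact (Qlem _ _ _ _ _ _ HF s1 (S s2) Hs DB _ HrB rA1 a x aDB aA1 xDB Hxa).
Qed.
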